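(* Let $\pi_0\in(0,1)$, $\sigma\in(0,0.25]$, and $\psi:[0,1]\to\mathbb{R}$ non-decreasing with $\psi(0)<\psi(1)$. For a strategy pair $(p_0,p_1)\in[0,1]^2$ define $\pi_S$, $\pi_C$, $\Phi_\theta(C,\sigma,\pi_0,p_0,p_1)$ and $\Phi_\theta(S,\sigma,\pi_0,p_0,p_1)$ as follows: $$\pi_S=\frac{(1-p_1)\pi_0}{(1-p_1)\pi_0+(1-p_0)(1-\pi_0)},\qquad \pi_C=\frac{p_1\pi_0}{p_1\pi_0+p_0(1-\pi_0)},$$ $$\Phi_\theta(C,\cdot)=0.5+2\sigma\theta+(0.5+2\sigma\theta)\psi\!\left(\tfrac{(1+4\sigma)\pi_C}{1+4\sigma\pi_C}\right)+(0.5-2\sigma\theta)\psi\!\left(\tfrac{(1-4\sigma)\pi_C}{1-4\sigma\pi_C}\right),\qquad \Phi_\theta(S,\cdot)=0.5+\psi(\pi_S).$$ A pair $(p_0,p_1)$ is an equilibrium if for each $\theta\in\{0,1\}$, $p_\theta$ maximizes $p\,\Phi_\theta(C,\sigma,\pi_0,p_0,p_1)+(1-p)\Phi_\theta(S,\sigma,\pi_0,p_0,p_1)$ over $p\in[0,1]$ (beliefs computed from $(p_0,p_1)$). If an equilibrium with $p_0,p_1\in\{0,1\}$ exists, then it is pooling, i.e. $p_0=p_1$.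
   Context: Setting: the expert knows his type $\theta\in\{0,1\}$ (competent iff $\theta=1$, prior $\pi_0$); the advisee does not. $p_\theta$ is the probability that type $\theta$ chooses the complex rule $C$ (take the action iff a condition holds, correct with probability $0.5+2\sigma\theta$) over the simple rule $S$ (take the action, correct with probability $0.5$). The advisee forms beliefs by Bayes' rule given the strategies; $\psi$ is the reputation payoff of the posterior that the expert is competent, added to the accuracy payoff. An equilibrium corresponds to a perfect Bayesian equilibrium with correct conjectures. *)

(* Defs.v *)
From mathcomp Require Import all_boot all_order all_algebra.
Set Implicit Arguments. Unset Strict Implicit. Unset Printing Implicit Defensive.
Import Order.TTheory GRing.Theory Num.Theory.
Local Open Scope ring_scope.

Section Model.
Variable R : realFieldType.

(* Bayesian posterior that the expert is competent after the simple rule S. *)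
Definition piS (pi0 p0 p1 : R) : R :=
  (1 - p1) * pi0 / ((1 - p1) * pi0 + (1 - p0) * (1 - pi0)).

(* Bayesian posterior that the expert is competent after the complex rule C. *)
Definition piC (pi0 p0 p1 : R) : R :=
  p1 * pi0 / (p1 * pi0 + p0 * (1 - pi0)).

(* type theta : bool (true = competent, theta = 1) *)
Definition PhiC (psi : R -> R) (theta : bool) (sigma pi0 p0 p1 : R) : R :=
  let t : R := (theta : nat)%:R in
  let pC := piC pi0 p0 p1 in
  2^-1 + 2 * sigma * t
  + (2^-1 + 2 * sigma * t) * psi ((1 + 4 * sigma) * pC / (1 + 4 * sigma * pC))
  + (2^-1 - 2 * sigma * t) * psi ((1 - 4 * sigma) * pC / (1 - 4 * sigma * pC)).

Definition PhiS (psi : R -> R) (theta : bool) (sigma pi0 p0 p1 : R) : R :=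
  2^-1 + psi (piS pi0 p0 p1).

Definition payoff (psi : R -> R) (theta : bool) (sigma pi0 p0 p1 p : R) : R :=
  p * PhiC psi theta sigma pi0 p0 p1 + (1 - p) * PhiS psi theta sigma pi0 p0 p1.

Definition strat (theta : bool) (p0 p1 : R) : R := if theta then p1 else p0.

Definition equilibrium (psi : R -> R) (sigma pi0 p0 p1 : R) : Prop :=
  [/\ 0 <= p0 <= 1, 0 <= p1 <= 1 &
   forall (theta : bool) (p : R), 0 <= p <= 1 ->
     payoff psi theta sigma pi0 p0 p1 p
       <= payoff psi theta sigma pi0 p0 p1 (strat theta p0 p1)].

End Model.

(* Main.v *)
Require Import Defs.
From mathcomp Require Import all_boot all_order all_algebra.
From mathcomp Require Import lra.
Import Order.TTheory GRing.Theory Num.Theory.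
Local Open Scope ring_scope.

Theorem proposition7 (R : realFieldType) (pi0 sigma : R) (psi : R -> R) :
  0 < pi0 < 1 ->
  0 < sigma <= 4^-1 ->
  (forall x y : R, 0 <= x -> x <= y -> y <= 1 -> psi x <= psi y) ->
  psi 0 < psi 1 ->
  forall p0 p1 : R, (p0 = 0 \/ p0 = 1) -> (p1 = 0 \/ p1 = 1) ->
  equilibrium psi sigma pi0 p0 p1 -> p0 = p1.
Proof.
move=> /andP[pi0p pi01] /andP[sp s4] mono hpsi p0 p1 h0 h1 [_ _ H].
have H01 : 0 <= (1:R) <= 1 by rewrite ler01 lexx.
case: h0 h1 H => -> [->|->] H //.
-
  have := H false 1 H01.
  rewrite /payoff /strat /PhiC /PhiS /piS /piC /=.
  rewrite subrr !mul0r !mul1r !addr0 subr0 mulr0 divff ?gt_eqF //.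
  rewrite !mulr1 divff; last by rewrite gt_eqF // ltr_wpDr // mulr_ge0 // ltW.
  have hx : psi 0 <= psi ((1 - 4 * sigma) / (1 - 4 * sigma)).
    have [->|nz] := eqVneq (1 - 4 * sigma) 0; first by rewrite mul0r.
    by rewrite divff //; apply: mono; rewrite ?lexx ?ler01.
  rewrite subr0 !addr0 mul1r add0r.
  move: hx (hpsi); set c := psi _; set a := psi 1; set b := psi 0 => hx hp hh.
  have h2 : (2:R)^-1 + 2^-1 = 1 by rewrite -div1r -splitr.
  have : a <= b by clear H; nra. by rewrite leNgt hp.
-
  have := H false 0.
  rewrite lexx ler01 /= => /(_ isT).
  rewrite /payoff /strat /PhiC /PhiS /piS /piC /=.
  rewrite ?(mul0r, mulr0, add0r, addr0, mul1r, mulr1, subr0, subrr). rewrite divff ?gt_eqF // ?(mul1r, mulr1, subr0, add0r, addr0, mul0r, mulr0, subrr).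
  move: (hpsi); set a := psi 1; set b := psi 0 => hp hh.
  have h2 : (2:R)^-1 + 2^-1 = 1 by rewrite -div1r -splitr.
  have : a <= b by clear H; nra. by rewrite leNgt hp.
Qed.
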